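(* If a square matrix $A$ has a $k\times k$ principal submatrix $A[\kappa]$ that is an invertible, Hurwitz-unstable $P^-_0$ matrix and that has a Hurwitz-stable $(k-1)\times(k-1)$ principal submatrix, then $A$ is $D$-Hopf.
   Context: Hurwitz-stable: all eigenvalues have negative real part; Hurwitz-unstable: at least one eigenvalue has positive real part. $P^-_0$ matrix: every nonzero $j\times j$ principal minor has sign $(-1)^j$. Inertia: numbers of eigenvalues with negative, positive, zero real part. $A$ is $D$-Hopf if there exist an invertible principal submatrix $A[\kappa']$ and positive diagonal $D_1,D_2$ with $\operatorname{inertia}(A[\kappa']D_1)\ne\operatorname{inertia}(A[\kappa']D_2)$. *)

(* Defs.v *)
From HB Require Import structures.
From mathcomp Require Import all_boot all_order all_algebra.
From mathcomp Require Import complex.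
From mathcomp Require Import reals.
Set Implicit Arguments. Unset Strict Implicit. Unset Printing Implicit Defensive.
Import Order.TTheory GRing.Theory Num.Theory.
Local Open Scope ring_scope.

Section Defs.
Variable R : rcfType.

Definition cmx n (A : 'M[R]_n) : 'M[R[i]]_n := map_mx (real_complex R) A.

(* principal submatrix A[K], rows/columns of K in increasing order *)
Definition principal_sub n (A : 'M[R]_n) (K : {set 'I_n}) : 'M[R]_#|K| :=
  mxsub (@enum_val _ (mem K)) (@enum_val _ (mem K)) A.

Lemma char_poly_splits n (A : 'M[R]_n) :
  exists s : seq R[i], char_poly (cmx A) == \prod_(z <- s) ('X - z%:P).
Proof.
have [s Hs] := closed_field_poly_normal (char_poly (cmx A)).
exists s; apply/eqP; rewrite {1}Hs.
by have /monicP -> := char_poly_monic (cmx A); rewrite scale1r.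
Qed.

(* the eigenvalues of A, listed with algebraic multiplicity *)
Definition eigs n (A : 'M[R]_n) : seq R[i] := xchoose (char_poly_splits A).

Definition inertia n (A : 'M[R]_n) : nat * nat * nat :=
  (count (fun z => Re z < 0) (eigs A),
   count (fun z => 0 < Re z) (eigs A),
   count (fun z => Re z == 0) (eigs A)).

Definition hurwitz_stable n (A : 'M[R]_n) : Prop :=
  forall z : R[i], eigenvalue (cmx A) z -> Re z < 0.

Definition hurwitz_unstable n (A : 'M[R]_n) : Prop :=
  exists z : R[i], eigenvalue (cmx A) z /\ 0 < Re z.

Definition P0minus n (A : 'M[R]_n) : Prop :=
  forall L : {set 'I_n}, \det (principal_sub A L) != 0 ->
    Num.sg (\det (principal_sub A L)) = (-1) ^+ #|L|.

Definition D_Hopf n (A : 'M[R]_n) : Prop :=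
  exists K' : {set 'I_n},
    principal_sub A K' \in unitmx /\
    exists D1 D2 : 'rV[R]_#|K'|,
      (forall j, 0 < D1 0 j) /\ (forall j, 0 < D2 0 j) /\
      inertia (principal_sub A K' *m diag_mx D1)
        <> inertia (principal_sub A K' *m diag_mx D2).
End Defs.

(* Main.v *)
Require Import Defs.
From HB Require Import structures.
From mathcomp Require Import all_boot all_order all_algebra.
From mathcomp Require Import complex.
From mathcomp Require Import reals.
From HB Require Import structures.
From mathcomp Require Import all_boot all_order all_algebra.
From mathcomp Require Import complex.
From mathcomp Require Import fingroup perm ring lra zify.
Import Order.TTheory GRing.Theory Num.Theory.
Local Open Scope ring_scope.
Set Implicit Arguments. Unset Strict Implicit. Unset Printing Implicit Defensive.
From mathcomp Require Import fingroup perm ring lra.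
Section C.
Variable R : rcfType.
Implicit Types x y : R[i].
Local Notation Re := (@complex.Re R).
Local Notation Im := (@complex.Im R).
Definition nrm x : R := Re `|x|.
Lemma nrmE x : `|x| = (nrm x)%:C%C.
Proof. by rewrite /nrm RRe_real // normr_real. Qed.
Lemma nrm_ge0 x : 0 <= nrm x.
Proof. by case: x => a b; rewrite /nrm /= sqrtr_ge0. Qed.
Lemma nrmM x y : nrm (x * y) = nrm x * nrm y.
Proof. by apply: complexI; rewrite rmorphM /= -!nrmE normrM. Qed.
Lemma nrmD x y : nrm (x + y) <= nrm x + nrm y.
Proof. by rewrite -lecR rmorphD /= -!nrmE ler_normD. Qed.
Lemma nrmN x : nrm (- x) = nrm x.
Proof. by apply: complexI; rewrite -!nrmE normrN. Qed.
Lemma nrmR (r : R) : nrm r%:C%C = `|r|.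
Proof. by rewrite /nrm /= expr0n /= addr0 sqrtr_sqr. Qed.
Lemma Re_nrm x : `|Re x| <= nrm x.
Proof. by rewrite -lecR -nrmE normc_ge_Re. Qed.
Lemma ReM x y : Re (x * y) = Re x * Re y - Im x * Im y.
Proof. by case: x y => a b [c d]. Qed.
Lemma ReB x y : Re (x - y) = Re x - Re y.
Proof. by case: x y => a b [c d]. Qed.
Lemma ReD x y : Re (x + y) = Re x + Re y.
Proof. by case: x y => a b [c d]. Qed.
Lemma nrm1 : nrm 1 = 1.
Proof. by rewrite nrmR normr1. Qed.
Lemma nrmX x n : nrm (x ^+ n) = nrm x ^+ n.
Proof. by elim: n => [|n IH]; rewrite ?expr0 ?nrm1 // !exprS nrmM IH. Qed.
Lemma nrm_sum (I : Type) (r : seq I) (F : I -> R[i]) :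
  nrm (\sum_(i <- r) F i) <= \sum_(i <- r) nrm (F i).
Proof.
elim/big_rec2: _ => [|i y z _ Hyz]; first by rewrite nrmR normr0.
by apply: le_trans (nrmD _ _) _; rewrite lerD2l.
Qed.
Lemma expr_mono (a : R) m n : 1 <= a -> (m <= n)%N -> a ^+ m <= a ^+ n.
Proof.
move=> a1 mn; rewrite -(subnK mn) exprD mulrC ler_peMr ?exprn_ege1 //.
by apply: exprn_ge0; lra.
Qed.
Lemma horner_bound (p : {poly R[i]}) x :
  nrm p.[x] <= (\sum_(i < size p) nrm p`_i) * (1 + nrm x) ^+ (size p).-1.
Proof.
rewrite horner_coef mulr_suml; apply: le_trans (nrm_sum _ _) _.
apply: ler_sum => i _; rewrite nrmM nrmX ler_wpM2l ?nrm_ge0 //.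
have h0 := nrm_ge0 x.
apply: (@le_trans _ _ ((1 + nrm x) ^+ i)).
  by apply: lerXn2r; rewrite ?nnegrE //; lra.
apply: expr_mono; first lra.
have := ltn_ord i; move: (nat_of_ord i) => k; case: (size p) => // n.
Qed.
Lemma horner_split (p : {poly R[i]}) x :
  p.[x] = p.[0] + x * (drop_poly 1 p).[x].
Proof.
rewrite -{1}(poly_take_drop 1 p) hornerD hornerM hornerX mulrC; congr (_ + _).
rewrite horner_coef0 /take_poly horner_poly big_ord1 expr0 mulr1.
by [].
Qed.
Lemma one_lower (l x : R[i]) : Re l < 0 -> 0 <= Re x ->
  (- Re l) * (1 + nrm x) / (1 + nrm l + - Re l) <= nrm (x - l).
Proof.
move=> hl hx.
set d := - Re l; set a := nrm l; set N := nrm x; set y := nrm (x - l).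
have a0 : 0 <= a by apply: nrm_ge0.
have N0 : 0 <= N by apply: nrm_ge0.
have yd : d <= y.
  have := Re_nrm (x - l); rewrite ReB => h; apply: le_trans h.
  by apply: le_trans (ler_norm _); rewrite /d; lra.
have yN : N - a <= y.
  have := nrmD (x - l) l; rewrite subrK -/N -/a -/y; lra.
rewrite ler_pdivrMr; last by rewrite /d; lra.
have h1 : 0 <= (y - d) * (1 + a) by apply: mulr_ge0; lra.
have h2 : 0 <= d * (y - N + a) by apply: mulr_ge0; rewrite /d; lra.
nra.
Qed.
Lemma prod_lower (rs : seq R[i]) : (forall l, l \in rs -> Re l < 0) ->
  exists2 m : R, 0 < m & forall x, 0 <= Re x ->
    m * (1 + nrm x) ^+ size rs <= nrm (\prod_(l <- rs) (x - l)).
Proof.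
elim: rs => [|l rs IH] H.
  by exists 1 => // x _; rewrite big_nil nrm1 expr0 mulr1.
have [m m0 Hm] : exists2 m : R, 0 < m & forall x, 0 <= Re x ->
    m * (1 + nrm x) ^+ size rs <= nrm (\prod_(l <- rs) (x - l)).
  by apply: IH => l' hl'; apply: H; rewrite in_cons hl' orbT.
have hl : Re l < 0 by apply: H; rewrite mem_head.
exists (m * ((- Re l) / (1 + nrm l + - Re l))).
  apply: mulr_gt0 => //; apply: divr_gt0; have := nrm_ge0 l; lra.
move=> x hx; rewrite big_cons nrmM /= exprS.
have -> : m * (- Re l / (1 + nrm l + - Re l)) * ((1 + nrm x) * (1 + nrm x) ^+ size rs)
  = ((- Re l) * (1 + nrm x) / (1 + nrm l + - Re l)) * (m * (1 + nrm x) ^+ size rs).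
  by ring.
apply: ler_pM; last exact: Hm.
- apply: divr_ge0; first (apply: mulr_ge0; have := nrm_ge0 x; lra).
  have := nrm_ge0 l; lra.
- apply: mulr_ge0; first lra. apply: exprn_ge0; have := nrm_ge0 x; lra.
- exact: one_lower.
Qed.
Lemma ReRM (k : R) y : Re (k%:C%C * y) = k * Re y.
Proof. by case: y => a b /=; rewrite mul0r subr0. Qed.
Lemma ReMR (k : R) y : Re (y * k%:C%C) = Re y * k.
Proof. by case: y => a b /=; rewrite mulr0 subr0. Qed.
Lemma ReJ y : Re (y^*)%C = Re y.
Proof. by case: y. Qed.

Lemma small_eps (c s : {poly R[i]}) (r0 r1 : R) :
  c \is monic -> (forall z, root c z -> Re z < 0) -> (size s <= size c)%N ->
  c.[0] = r0%:C%C -> 0 < r0 -> s.[0] = r1%:C%C -> 0 < r1 ->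
  exists2 eps : R, 0 < eps &
    forall x, 0 <= Re x -> x * c.[x] + eps%:C%C * s.[x] != 0.
Proof.
move=> cmon Hr szs c0 r0p s0 r1p.
have [rs Hrs] := closed_field_poly_normal c.
move/monicP: cmon => lc; rewrite lc scale1r in Hrs.
have hroots : forall l, l \in rs -> Re l < 0.
  by move=> l hl; apply: Hr; rewrite Hrs root_prod_XsubC.
have szc : size c = (size rs).+1 by rewrite Hrs size_prod_XsubC.
have [m m0 Hm] := prod_lower hroots.
set S := \sum_(i < size s) nrm s`_i.
have S0 : 0 <= S by apply: sumr_ge0 => i _; apply: nrm_ge0.
set c1 := drop_poly 1 c; set s1 := drop_poly 1 s.
set C1 := (\sum_(i < size c1) nrm c1`_i) * 2 ^+ (size c1).-1.
set S1 := (\sum_(i < size s1) nrm s1`_i) * 2 ^+ (size s1).-1.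
have C10 : 0 <= C1.
  by apply: mulr_ge0; [apply: sumr_ge0 => i _; apply: nrm_ge0 | apply: exprn_ge0].
have S10 : 0 <= S1.
  by apply: mulr_ge0; [apply: sumr_ge0 => i _; apply: nrm_ge0 | apply: exprn_ge0].
have Sm0 : 0 <= S / m by apply: divr_ge0 => //; lra.
set T := S / m + S / m * C1 + S1 + 1.
have T1 : 1 <= T by have := mulr_ge0 Sm0 C10; rewrite /T; lra.
set e := r0 / ((1 + r0) * T).
have e0 : 0 < e by apply: divr_gt0 => //; apply: mulr_gt0; lra.
exists e => // x hx; apply/negP => /eqP E.
have eT : e * T = r0 / (1 + r0).
  rewrite /e; field; apply/andP; split; apply/negP => /eqP; lra.
have eT1 : e * T < 1.
  by rewrite eT ltr_pdivrMr; lra.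
have eT0 : e * T < r0.
  by rewrite eT ltr_pdivrMr; nra.
set N := nrm x.
have N0 : 0 <= N by apply: nrm_ge0.
set P := (1 + N) ^+ size rs.
have P0 : 0 < P by apply: exprn_gt0; lra.
have Bs : nrm s.[x] <= S * P.
  apply: le_trans (horner_bound s x) _; rewrite ler_wpM2l //.
  apply: expr_mono; first lra.
  by move: szs; rewrite szc; case: (size s).
have Bc : m * P <= nrm c.[x].
  have -> : c.[x] = \prod_(l <- rs) (x - l).
    by rewrite Hrs horner_prod; apply: eq_bigr => l _; rewrite hornerXsubC.
  exact: Hm.
have EN : N * nrm c.[x] = e * nrm s.[x].
  have : x * c.[x] = - (e%:C%C * s.[x]) by apply/eqP; rewrite -addr_eq0 E.
  by move/(congr1 nrm); rewrite nrmN !nrmM nrmR ger0_norm //; lra.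
have hN : N * m <= e * S.
  rewrite -(ler_pM2r P0).
  apply: (@le_trans _ _ (N * nrm c.[x])).
    by rewrite -mulrA; apply: ler_wpM2l.
  rewrite EN -[e * S * P]mulrA; apply: ler_wpM2l => //; lra.
have hN' : N <= e * (S / m).
  by rewrite mulrA ler_pdivlMr.
have eSm : e * (S / m) <= e * T by apply: ler_wpM2l; [lra|rewrite /T; have := mulr_ge0 Sm0 C10; lra].
have N1 : N <= 1 by lra.
have Bc1 : nrm c1.[x] <= C1.
  apply: le_trans (horner_bound c1 x) _; apply: ler_wpM2l.
    by apply: sumr_ge0 => i _; apply: nrm_ge0.
  by apply: lerXn2r; rewrite ?nnegrE; lra.
have Bs1 : nrm s1.[x] <= S1.
  apply: le_trans (horner_bound s1 x) _; apply: ler_wpM2l.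
    by apply: sumr_ge0 => i _; apply: nrm_ge0.
  by apply: lerXn2r; rewrite ?nnegrE; lra.
set w := c.[0] + x * c1.[x] + e%:C%C * s1.[x].
have Ew : x * w = - (e * r1)%:C%C.
  have E' := E; rewrite (horner_split c) (horner_split s) -/c1 -/s1 c0 s0 in E'.
  by rewrite /w c0 -[RHS]add0r -E' (rmorphM (real_complex R) e r1); ring.
have Bw : nrm (w - c.[0]) < r0.
  have -> : w - c.[0] = x * c1.[x] + e%:C%C * s1.[x] by rewrite /w; ring.
  apply: le_lt_trans (nrmD _ _) _; rewrite !nrmM nrmR ger0_norm; last lra.
  have : N * nrm c1.[x] <= N * C1 by apply: ler_wpM2l.
  have : e * nrm s1.[x] <= e * S1 by apply: ler_wpM2l => //; lra.
  have : N * C1 <= e * (S / m) * C1 by apply: ler_wpM2r.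
  have : e * T = e * (S / m) + e * (S / m) * C1 + e * S1 + e by rewrite /T; ring.
  lra.
have Rw : 0 < Re w.
  have : Re w = r0 + Re (w - c.[0]) by rewrite ReB c0 /=; ring.
  have := Re_nrm (w - c.[0]); rewrite ler_norml; lra.
have := congr1 (fun z => Re (z * w^*%C)) Ew; rewrite /= -mulrA -sqr_normc nrmE.
rewrite -rmorphXn /= ReMR.
have -> : - (e * r1)%:C%C * w^*%C = (- (e * r1))%:C%C * w^*%C by rewrite rmorphN.
rewrite ReRM ReJ => H.
have : 0 <= Re x * nrm w ^+ 2 by apply: mulr_ge0 => //; apply: exprn_ge0; apply: nrm_ge0.
have : 0 < e * r1 * Re w by apply: mulr_gt0 => //; apply: mulr_gt0.
lra.
Qed.
End C.

Lemma det_mxsub_inj (T : comNzRingType) m n (e : m = n) (f : 'I_m -> 'I_n)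
  (A : 'M[T]_n) : injective f -> \det (mxsub f f A) = \det A.
Proof.
subst m => fi; pose s := perm.perm fi.
have -> : mxsub f f A = perm_mx s *m A *m perm_mx s^-1.
  by rewrite -row_permE -col_permE; apply/matrixP => i j; rewrite !mxE !perm.permE.
rewrite !det_mulmx mulrAC -det_mulmx -perm_mxM mulgV perm_mx1 det1 mul1r.
by [].
Qed.

Lemma char_poly_mxsub_inj (T : comNzRingType) m n (e : m = n) (f : 'I_m -> 'I_n)
  (A : 'M[T]_n) : injective f -> char_poly (mxsub f f A) = char_poly A.
Proof.
move=> fi; rewrite /char_poly -(det_mxsub_inj e (char_poly_mx A) fi); congr (\det _).
by apply/matrixP => i j; rewrite !mxE (inj_eq fi).
Qed.

Section Mat.
Variables (R : rcfType) (k : nat) (M : 'M[R]_k) (j : 'I_k).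
Definition dv (e : R) : 'rV[R]_k := \row_i (if i == j then e else 1).
Definition Mc e := cmx (M *m diag_mx (dv e)).

Lemma cp_lin e : char_poly (Mc e) =
  ((1 - e)%:C%C)%:P * char_poly (Mc 0) + (e%:C%C)%:P * char_poly (cmx M).
Proof.
rewrite /char_poly -!(det_tr (char_poly_mx _)); apply: (determinant_multilinear (i0 := j)).
- apply/rowP => l; rewrite /Mc /cmx !mul_mx_diag !mxE eqxx.
  case: (l == j); rewrite ?mulr1n ?mulr0n ?mulr0 ?mulr1 ?rmorphM ?rmorphB ?rmorph1 ?rmorph0 /=; ring.
- apply/matrixP => a b; rewrite /Mc /cmx !mul_mx_diag !mxE.
  by rewrite [lift j a == j]eq_sym (negbTE (neq_lift j a)).
- apply/matrixP => a b; rewrite /Mc /cmx !mul_mx_diag !mxE.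
  by rewrite [lift j a == j]eq_sym (negbTE (neq_lift j a)) mulr1.
Qed.

Lemma q_fact : char_poly (Mc 0) = 'X * char_poly (cmx (row' j (col' j M))).
Proof.
rewrite /char_poly (expand_det_col _ j) (bigD1 j) //= big1 ?addr0.
  rewrite /cofactor addnn -signr_odd odd_double expr0 mul1r.
  congr (_ * _); last congr (\det _).
    by rewrite /Mc /cmx !mul_mx_diag !mxE !eqxx mulr1n mulr0 ?rmorph0 subr0.
  apply/matrixP => a b; rewrite /Mc /cmx !mul_mx_diag !mxE (inj_eq lift_inj).
  by rewrite [lift j b == j]eq_sym (negbTE (neq_lift j b)) mulr1.
move=> i ij; rewrite /Mc /cmx !mul_mx_diag !mxE (negbTE ij) eqxx mulr0n mulr0.
by rewrite ?rmorph0 subr0 mul0r.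
Qed.
End Mat.

Section Core.
Variable R : rcfType.

Lemma mem_eigs n (A : 'M[R]_n) z : (z \in eigs A) = root (char_poly (cmx A)) z.
Proof.
have := xchooseP (char_poly_splits A); rewrite -/(eigs A).
by move: (eigs A) => s /eqP ->; rewrite root_prod_XsubC.
Qed.

Lemma ReC_lt0 (z : R[i]) : (Num.Theory.Re z < 0) = (complex.Re z < 0).
Proof. by rewrite -complexRe ltcE /= eqxx. Qed.
Lemma ReC_gt0 (z : R[i]) : (0 < Num.Theory.Re z) = (0 < complex.Re z).
Proof. by rewrite -complexRe ltcE /= eqxx. Qed.

Lemma sg_pos (x : R) n : x != 0 -> Num.sg x = (-1) ^+ n -> 0 < (-1) ^+ n * x.
Proof.
move=> x0 hs; rewrite [X in _ * X](numEsg x) hs mulrA -expr2 sqrr_sign mul1r.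
by rewrite normr_gt0.
Qed.

Lemma cmx_det n (A : 'M[R]_n) : \det (cmx A) = (\det A)%:C%C.
Proof. by rewrite /cmx det_map_mx. Qed.

Lemma count_Re_0 n (A : 'M[R]_n) :
  (forall w : R[i], root (char_poly (cmx A)) w -> 0 < complex.Re w -> False) ->
  count (fun z : R[i] => 0 < Num.Theory.Re z) (eigs A) = 0%N.
Proof.
move=> H; apply/eqP; rewrite -leqn0 leqNgt -has_count; apply/hasPn => w.
by rewrite mem_eigs ReC_gt0 => hr; apply/negP => wp; apply: (H w).
Qed.
Lemma count_Re_pos n (A : 'M[R]_n) (z : R[i]) : eigenvalue (cmx A) z ->
  0 < Num.Theory.Re z -> (0 < count (fun z : R[i] => (0 < Num.Theory.Re z)%R) (eigs A))%N.
Proof.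
move=> ez zp; rewrite -has_count; apply/hasP; exists z => //.
by rewrite mem_eigs -eigenvalue_root_char.
Qed.

Lemma inertia_neq n (A B : 'M[R]_n) (z : R[i]) :
  eigenvalue (cmx A) z -> 0 < Num.Theory.Re z ->
  (forall w : R[i], root (char_poly (cmx B)) w -> 0 < complex.Re w -> False) ->
  inertia A <> inertia B.
Proof.
move=> ez zp Hno H; have := count_Re_pos ez zp.
have E : (inertia A).1.2 = (inertia B).1.2 by rewrite H.
by move: E; rewrite /inertia /= (count_Re_0 Hno) => ->.
Qed.

Lemma core k (M : 'M[R]_k) : M \in unitmx -> hurwitz_unstable M -> P0minus M ->
  (exists L : {set 'I_k}, #|L| = (k - 1)%N /\ hurwitz_stable (principal_sub M L)) ->
  exists D1 D2 : 'rV[R]_k, (forall j, 0 < D1 0 j) /\ (forall j, 0 < D2 0 j) /\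
    inertia (M *m diag_mx D1) <> inertia (M *m diag_mx D2).
Proof.
move=> Mu [z [zeig zRe]] HP [L [HL Hst]].
have k0 : (0 < k)%N.
  case: k M Mu zeig HP L HL Hst => // M _ zeig *.
  by move: zeig; rewrite /eigenvalue flatmx0 eqxx.
have [j Hj] : exists j, ~: L = [set j].
  apply/cards1P; have := cardsC L; rewrite card_ord HL; lia.
have inL : forall i, (i \in L) = (i != j).
  by move=> i; rewrite -in_set1 -Hj in_setC negbK.
set B := principal_sub M L.
set M' := row' j (col' j M).
have hL : forall t, lift j t \in L by move=> t; rewrite inL eq_sym neq_lift.
pose g t := enum_rank_in (hL t) (lift j t).
have hg : forall t, enum_val (g t) = lift j t by move=> t; rewrite enum_rankK_in.
have ginj : injective g.
  by move=> a b /(congr1 enum_val); rewrite !hg => /lift_inj.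
have eL : k.-1 = #|L| by rewrite HL subn1.
have M'B : M' = mxsub g g B.
  by apply/matrixP => a b; rewrite /M' /B /principal_sub !mxE !hg.
have cpM' : char_poly (cmx M') = char_poly (cmx B).
  by rewrite /cmx -!map_char_poly M'B (char_poly_mxsub_inj eL).
set c := char_poly (cmx M').
have croot : forall w, root c w -> complex.Re w < 0.
  by move=> w; rewrite /c cpM' -eigenvalue_root_char => /Hst; rewrite ReC_lt0.
have detB : \det M' = \det B by rewrite M'B (det_mxsub_inj eL).
set r0 := (-1) ^+ k.-1 * \det B.
have c0 : c.[0] = r0%:C%C.
  by rewrite horner_coef0 char_poly_det cmx_det detB /r0 rmorphM rmorph_sign.
have B0 : \det B != 0.
  apply/eqP => d0; have := croot 0; rewrite /root c0 /r0 d0 mulr0 eqxx /=.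
  by move/(_ isT); rewrite ltxx.
have r0p : 0 < r0.
  by apply: sg_pos => //; rewrite eL; apply: HP.
set p1 := char_poly (cmx M).
set s := p1 - 'X * c.
have detM : \det (principal_sub M [set: 'I_k]) = \det M.
  by apply: det_mxsub_inj; [rewrite cardsT card_ord | exact: enum_val_inj].
have M0 : \det M != 0 by rewrite -unitfE -unitmxE.
set r1 := (-1) ^+ k * \det M.
have r1p : 0 < r1.
  apply: sg_pos => //; have := HP [set: 'I_k]; rewrite detM => /(_ M0).
  by rewrite cardsT card_ord.
have s0 : s.[0] = r1%:C%C.
  rewrite /s hornerD hornerN hornerM hornerX mul0r subr0 horner_coef0.
  by rewrite char_poly_det cmx_det rmorphM rmorph_sign.
have sp1 : size p1 = k.+1 by rewrite size_char_poly.
have sc : size c = k by rewrite size_char_poly prednK.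
have lp1 : p1`_k = 1.
  by have /monicP := char_poly_monic (cmx M); rewrite lead_coefE sp1.
have lc : c`_k.-1 = 1.
  by have /monicP := char_poly_monic (cmx M'); rewrite lead_coefE sc.
have szs : (size s <= size c)%N.
  rewrite sc; apply/leq_sizeP => i hi; rewrite /s coefB coefXM.
  have -> : (i == 0%N) = false by apply/eqP; lia.
  have [->|ik] := eqVneq i k; first by rewrite lp1 lc subrr.
  have ik2 : (k < i)%N by rewrite ltn_neqAle eq_sym ik.
  have h1 : (size p1 <= i)%N by rewrite sp1.
  have h2 : (size c <= i.-1)%N by rewrite sc -ltnS prednK // (leq_trans _ ik2).
  by rewrite (nth_default _ h1) (nth_default _ h2) subrr.
have [eps eps0 Heps] := small_eps (char_poly_monic _) croot szs c0 r0p s0 r1p.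
exists (dv j 1), (dv j eps).
split; first by move=> i; rewrite mxE; case: ifP => _; lra.
split; first by move=> i; rewrite mxE; case: ifP => _; lra.
have Hno : forall w : R[i], root (char_poly (cmx (M *m diag_mx (dv j eps)))) w ->
    0 < complex.Re w -> False.
  move=> w; rewrite -/(Mc M j eps) cp_lin q_fact -/M' -/c -/p1 => hr wp.
  have := Heps w (ltW wp); move/eqP; apply.
  move: hr; rewrite /root /s !hornerE -/p1 -/c => /eqP <-.
  rewrite rmorphB rmorph1 /=; ring.
have Hyes : 0 < complex.Re z by rewrite -ReC_gt0.
have M1 : M *m diag_mx (dv j 1) = M.
  by apply/matrixP => a b; rewrite mul_mx_diag !mxE; case: ifP => _; rewrite mulr1.
apply: (inertia_neq _ zRe Hno).
rewrite M1; exact: zeig.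
Qed.
End Core.

Unset Implicit Arguments.

Theorem mainTheorem8 (R : realType) (n : nat) (A : 'M[R]_n) (K : {set 'I_n}) :
  principal_sub A K \in unitmx ->
  hurwitz_unstable (principal_sub A K) ->
  P0minus (principal_sub A K) ->
  (exists L : {set 'I_#|K|},
      #|L| = (#|K| - 1)%N /\ hurwitz_stable (principal_sub (principal_sub A K) L)) ->
  D_Hopf A.
Proof.
move=> Mu Hu HP HL.
have [D1 [D2 [h1 [h2 h3]]]] := core Mu Hu HP HL.
exists K; split; first exact: Mu.
exists D1, D2; exact: (conj h1 (conj h2 h3)).
Qed.
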